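(* Let $n\geq 2$. Every countable dense $n$-dimensional partial order with realizers is isomorphic to $\mathbf{D}_{n,<_1,\ldots,<_n}=(D_n,<,<_1,\ldots,<_n)$, and $\mathbf{D}_{n,<_1,\ldots,<_n}$ is itself a countable dense $n$-dimensional partial order with realizers; i.e. it is the unique such structure up to isomorphism.
   Context: Fix $n\geq 2$ and a set $D_n\subseteq\mathbb{Q}^n$ which is dense in $\mathbb{Q}^n$ (product topology) and such that no two distinct points of $D_n$ share a common coordinate. On $D_n$, $<$ is the product order ($\mathbf{a}<\mathbf{b}$ iff $a_i\leq b_i$ for all $i$ and $\mathbf{a}\neq\mathbf{b}$) and $<_i$ is the $i$th coordinate order ($\mathbf{a}<_i\mathbf{b}$ iff $a_i<b_i$). An $n$-dimensional partial order with realizers is a structure $(P,<,<_1,\ldots,<_n)$ ($P$ nonempty) where $<_1,\ldots,<_n$ are strict linear orders on $P$ and $a<b$ iff $a<_ib$ for all $i\leq n$. It is dense (i.e. a model of the theory $\mathsf{DPO}_{n,<_1,\ldots,<_n}$) if every region determined by finitely many points is nonempty, precisely: for every nonempty finite $F\subseteq P$ and every choice, for each $i\leq n$, of a ''gap'' of $F$ in $<_i$ — namely a pair $(l_i,r_i)$ with $l_i\in F\cup\{-\infty\}$, $r_i\in F\cup\{+\infty\}$, $l_i<_i r_i$ and no element of $F$ strictly $<_i$-between $l_i$ and $r_i$ — there is $u\in P$ with $l_i<_iu<_ir_i$ for all $i\leq n$ (comparisons with $\pm\infty$ being automatically true). Isomorphisms preserve and reflect all of $<,<_1,\ldots,<_n$.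 *)

(* Defs.v *)
From Stdlib Require List.
From mathcomp Require Import all_boot all_order all_algebra.
Set Implicit Arguments. Unset Strict Implicit. Unset Printing Implicit Defensive.
Import Order.TTheory GRing.Theory Num.Theory.
Local Open Scope ring_scope.

Definition strict_linear_order (P : Type) (R : P -> P -> Prop) : Prop :=
  (forall a, ~ R a a) /\
  (forall a b c, R a b -> R b c -> R a c) /\
  (forall a b, a <> b -> R a b \/ R b a).

Definition npo_realizers (n : nat) (P : Type) (lt : P -> P -> Prop)
    (lts : 'I_n -> P -> P -> Prop) : Prop :=
  inhabited P /\
  (forall i, strict_linear_order (lts i)) /\
  (forall a b, lt a b <-> (forall i, lts i a b)).

(* comparisons with -oo (None as lower end) and +oo (None as upper end) *)
Definition lt_low (P : Type) (R : P -> P -> Prop) (l : option P) (u : P) : Prop :=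
  match l with None => True | Some a => R a u end.
Definition lt_up (P : Type) (R : P -> P -> Prop) (u : P) (r : option P) : Prop :=
  match r with None => True | Some b => R u b end.
Definition lt_ends (P : Type) (R : P -> P -> Prop) (l r : option P) : Prop :=
  match l, r with Some a, Some b => R a b | _, _ => True end.

Definition end_in (P : Type) (F : list P) (e : option P) : Prop :=
  match e with None => True | Some a => List.In a F end.

Definition is_gap (P : Type) (R : P -> P -> Prop) (F : list P) (l r : option P) : Prop :=
  end_in F l /\ end_in F r /\ lt_ends R l r /\
  (forall x, List.In x F -> ~ (lt_low R l x /\ lt_up R x r)).

Definition dense_regions (n : nat) (P : Type) (lts : 'I_n -> P -> P -> Prop) : Prop :=
  forall (F : list P) (l r : 'I_n -> option P),
    F <> nil ->
    (forall i, is_gap (lts i) F (l i) (r i)) ->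
    exists u : P, forall i, lt_low (lts i) (l i) u /\ lt_up (lts i) u (r i).

Definition DPO (n : nat) (P : Type) (lt : P -> P -> Prop)
    (lts : 'I_n -> P -> P -> Prop) : Prop :=
  npo_realizers lt lts /\ dense_regions lts.

Definition countable_type (P : Type) : Prop :=
  exists f : P -> nat, forall a b, f a = f b -> a = b.

Definition isomorphic (n : nat)
    (P : Type) (ltP : P -> P -> Prop) (ltsP : 'I_n -> P -> P -> Prop)
    (Q : Type) (ltQ : Q -> Q -> Prop) (ltsQ : 'I_n -> Q -> Q -> Prop) : Prop :=
  exists f : P -> Q,
    (exists g : Q -> P, (forall a, g (f a) = a) /\ (forall b, f (g b) = b)) /\
    (forall a b, ltP a b <-> ltQ (f a) (f b)) /\
    (forall i a b, ltsP i a b <-> ltsQ i (f a) (f b)).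

(* dense in Q^n for the product topology: meets every nonempty basic open box *)
Definition dense_in_Qn (n : nat) (D : {ffun 'I_n -> rat} -> Prop) : Prop :=
  forall a b : {ffun 'I_n -> rat}, (forall i, a i < b i) ->
    exists x, D x /\ (forall i, a i < x i < b i).

Definition distinct_coords (n : nat) (D : {ffun 'I_n -> rat} -> Prop) : Prop :=
  forall x y, D x -> D y -> x <> y -> forall i, x i <> y i.

Definition Dcar (n : nat) (D : {ffun 'I_n -> rat} -> Prop) : Type := {x | D x}.

Definition Dlt (n : nat) (D : {ffun 'I_n -> rat} -> Prop) (a b : Dcar D) : Prop :=
  (forall i, proj1_sig a i <= proj1_sig b i) /\ proj1_sig a <> proj1_sig b.

Definition Dlts (n : nat) (D : {ffun 'I_n -> rat} -> Prop) (i : 'I_n) (a b : Dcar D) : Prop :=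
  proj1_sig a i < proj1_sig b i.

(* Main.v *)
Require Import Defs.
From mathcomp Require Import all_boot all_order all_algebra.
From Stdlib Require Import Classical ClassicalEpsilon ProofIrrelevance.
Set Implicit Arguments. Unset Strict Implicit. Unset Printing Implicit Defensive.
Import Order.TTheory GRing.Theory Num.Theory.

Lemma fchoice (A B : Type) (R : A -> B -> Prop) :
  (forall a, exists b, R a b) -> exists f : A -> B, forall a, R a (f a).
Proof.
move=> H; exists (fun a => proj1_sig (constructive_indefinite_description _ (H a))).
move=> a; exact: proj2_sig (constructive_indefinite_description _ (H a)).
Qed.

Lemma max_exists (Q : Type) (R : Q -> Q -> Prop) (F : list Q) (c : Q -> Prop) :
  strict_linear_order R -> (exists x, List.In x F /\ c x) ->
  exists a, List.In a F /\ c a /\ forall x, List.In x F -> c x -> x = a \/ R x a.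
Proof.
move=> [Irr [Tr Tot]]; elim: F => [|y F IH] /=; first by case=> x [].
move=> Hex0.
case: (classic (exists x, List.In x F /\ c x)) => [Hex|Hno].
- have [a [aF [ca Ha]]] := IH Hex.
  case: (classic (c y)) => cy.
  + case: (classic (y = a)) => [->|Hne].
    * exists a; split; [by left|split=>//]. move=> z [<-|zF] cz; [by left| exact: Ha].
    * case: (Tot _ _ Hne) => Hya.
      -- exists a; split;[by right|split=>//]. move=> z [<-|zF] cz; [by right|exact: Ha].
      -- exists y; split;[by left|split=>//]. move=> z [<-|zF] cz; first by left.
         right; case: (Ha z zF cz) => [->//|Hza]; exact: Tr _ _ _ Hza Hya.
  + exists a; split;[by right|split=>//]. move=> z [<-|zF] cz; [by [] |exact: Ha].
- have cy : c y.
    case: Hex0 => x [[<-|xF] cx] //; by exfalso; apply: Hno; exists x.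
  exists y; split;[by left|split=>//]. move=> z [<-|zF] cz; first by left.
  by exfalso; apply: Hno; exists z.
Qed.

Lemma flip_slo (Q : Type) (R : Q -> Q -> Prop) :
  strict_linear_order R -> strict_linear_order (fun x y => R y x).
Proof.
move=> [Irr [Tr Tot]]; split; [|split] => //.
- move=> a b c' H1 H2; exact: Tr _ _ _ H2 H1.
- move=> a b H; case: (Tot _ _ H); by [right|left].
Qed.

Lemma gap_exists (Q : Type) (R : Q -> Q -> Prop) (F : list Q) (c : Q -> Prop) :
  strict_linear_order R ->
  (forall x y, List.In x F -> List.In y F -> R x y -> c y -> c x) ->
  exists l r : option Q, is_gap R F l r /\
    (forall x u, List.In x F -> c x -> lt_low R l u -> R x u) /\
    (forall x u, List.In x F -> ~ c x -> lt_up R u r -> R u x).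
Proof.
move=> Hs Hdc; have [Irr [Tr Tot]] := Hs.
have [l Hl] : exists l : option Q, match l with
   Some a => List.In a F /\ c a /\ forall x, List.In x F -> c x -> x = a \/ R x a
 | None => forall x, List.In x F -> ~ c x end.
  case: (classic (exists x, List.In x F /\ c x)) => [Hex|Hno].
  - have [a Ha] := max_exists Hs Hex; by exists (Some a).
  - exists None => x xF cx; apply: Hno; by exists x.
have [r Hr] : exists r : option Q, match r with
   Some b => List.In b F /\ ~ c b /\ forall x, List.In x F -> ~ c x -> x = b \/ R b x
 | None => forall x, List.In x F -> c x end.
  case: (classic (exists x, List.In x F /\ ~ c x)) => [Hex|Hno].
  - have [a Ha] := max_exists (flip_slo Hs) Hex; by exists (Some a).
  - exists None => x xF; apply: NNPP => cx; apply: Hno; by exists x.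
exists l, r; split; [split; [|split; [|split]]|split].
- by case: l Hl => [a [? _]|].
- by case: r Hr => [b [? _]|].
- case: l Hl => [a [aF [ca Ha]]|] //; case: r Hr => [b [bF [cb Hb]]|] //=.
  have Hne : a <> b by move=> E; apply: cb; rewrite -E.
  case: (Tot _ _ Hne) => // Hba; exfalso; apply: cb; exact: Hdc Hba ca.
- move=> x xF [H1 H2]; case: (classic (c x)) => cx.
  + case: l Hl H1 => [a [aF [ca Ha]]|Hl] /= H1; last exact: Hl x xF cx.
    case: (Ha x xF cx) => [E|Hxa]; first by subst; exact: Irr H1.
    exact: Irr (Tr _ _ _ H1 Hxa).
  + case: r Hr H2 => [b [bF [cb Hb]]|Hr] /= H2; last exact: cx (Hr x xF).
    case: (Hb x xF cx) => [E|Hbx]; first by subst; exact: Irr H2.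
    exact: Irr (Tr _ _ _ H2 Hbx).
- move=> x u xF cx; case: l Hl => [a [aF [ca Ha]]|Hl] /= H1; last by case: (Hl x xF cx).
  case: (Ha x xF cx) => [->//|Hxa]; exact: Tr _ _ _ Hxa H1.
- move=> x u xF cx; case: r Hr => [b [bF [cb Hb]]|Hr] /= H1; last by case: (cx (Hr x xF)).
  case: (Hb x xF cx) => [->//|Hbx]; exact: Tr _ _ _ H1 Hbx.
Qed.

Definition good (I P Q : Type) (RP : I -> P -> P -> Prop) (RQ : I -> Q -> Q -> Prop)
  (s : list (P * Q)) :=
  forall x y, List.In x s -> List.In y s -> forall i, RP i (fst x) (fst y) <-> RQ i (snd x) (snd y).

Definition ext (I Q : Type) (R : I -> Q -> Q -> Prop) :=
  forall (F : list Q) (c : I -> Q -> Prop),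
   (forall i x y, List.In x F -> List.In y F -> R i x y -> c i y -> c i x) ->
   exists u, forall i x, List.In x F -> (c i x -> R i x u) /\ (~ c i x -> R i u x).

Definition slo_all (I Q : Type) (R : I -> Q -> Q -> Prop) := forall i, strict_linear_order (R i).

Lemma good_inj1 I P Q (RP : I -> P -> P -> Prop) (RQ : I -> Q -> Q -> Prop) (i0 : I) s :
  slo_all RP -> slo_all RQ -> good RP RQ s ->
  forall a b b', List.In (a, b) s -> List.In (a, b') s -> b = b'.
Proof.
move=> HP HQ Hg a b b' H1 H2; apply: NNPP => Hne.
have [IrrP _] := HP i0; have [_ [_ TotQ]] := HQ i0.
case: (TotQ _ _ Hne) => H.
- apply: (IrrP a); exact: (proj2 (Hg _ _ H1 H2 i0)) H.
- apply: (IrrP a); exact: (proj2 (Hg _ _ H2 H1 i0)) H.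
Qed.

Lemma good_inj2 I P Q (RP : I -> P -> P -> Prop) (RQ : I -> Q -> Q -> Prop) (i0 : I) s :
  slo_all RP -> slo_all RQ -> good RP RQ s ->
  forall a a' b, List.In (a, b) s -> List.In (a', b) s -> a = a'.
Proof.
move=> HP HQ Hg a a' b H1 H2; apply: NNPP => Hne.
have [IrrQ _] := HQ i0; have [_ [_ TotP]] := HP i0.
case: (TotP _ _ Hne) => H.
- apply: (IrrQ b); exact: (proj1 (Hg _ _ H1 H2 i0)) H.
- apply: (IrrQ b); exact: (proj1 (Hg _ _ H2 H1 i0)) H.
Qed.

Lemma forth I P Q (RP : I -> P -> P -> Prop) (RQ : I -> Q -> Q -> Prop) (i0 : I) s p :
  slo_all RP -> slo_all RQ -> ext RQ -> good RP RQ s ->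
  exists q, good RP RQ ((p, q) :: s).
Proof.
move=> HP HQ HE Hg.
case: (classic (exists q, List.In (p, q) s)) => [[q Hq]|Hnp].
  exists q => x y Hx Hy; apply: Hg.
  - by case: Hx => [<-|].
  - by case: Hy => [<-|].
pose c := fun i y => exists a, List.In (a, y) s /\ RP i a p.
have Hdc : forall i x y, List.In x (List.map snd s) -> List.In y (List.map snd s) ->
    RQ i x y -> c i y -> c i x.
  move=> i x y /List.in_map_iff [[a' x'] [/= E1 H1]] _ Hxy [a [Ha Hap]]; subst x'.
  exists a'; split => //.
  have := proj2 (Hg _ _ H1 Ha i) Hxy => /= Ha'a.
  by have [_ [Tr _]] := HP i; exact: Tr _ _ _ Ha'a Hap.
have [u Hu] := HE _ _ Hdc.
exists u.
have inF : forall a y, List.In (a, y) s -> List.In y (List.map snd s).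
  by move=> a y H; apply/List.in_map_iff; exists (a, y).
have C1 : forall i a y, List.In (a, y) s -> (RP i a p <-> RQ i y u).
  move=> i a y H; have [IrrQ [TrQ _]] := HQ i; split => Hr.
  - apply: (proj1 (Hu i y (inF _ _ H))); by exists a.
  - case: (classic (c i y)) => cy.
    + case: cy => [a' [Ha' Ha'p]].
      by rewrite (good_inj2 i0 HP HQ Hg H Ha').
    + exfalso; apply: (IrrQ y); apply: TrQ Hr (proj2 (Hu i y (inF _ _ H)) cy).
have C2 : forall i a y, List.In (a, y) s -> (RP i p a <-> RQ i u y).
  move=> i a y H; have [IrrQ [TrQ _]] := HQ i; have [IrrP [TrP TotP]] := HP i; split => Hr.
  - apply: (proj2 (Hu i y (inF _ _ H))) => -[a' [Ha' Ha'p]].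
    rewrite -(good_inj2 i0 HP HQ Hg H Ha') in Ha'p.
    exact: IrrP (TrP _ _ _ Hr Ha'p).
  - have Hne : p <> a by move=> E; apply: Hnp; exists y; rewrite E.
    case: (TotP _ _ Hne) => // Hap; exfalso.
    apply: (IrrQ u); exact: TrQ Hr (proj1 (C1 i a y H) Hap).
move=> [a y] [b z] /= Hx Hy i.
case: Hx => [[<- <-]|Hx]; case: Hy => [[<- <-]|Hy] /=.
- have [IrrQ _] := HQ i; have [IrrP _] := HP i; by split => H; [case: (IrrP _ H)|case: (IrrQ _ H)].
- exact: C2.
- exact: C1.
- exact: (Hg _ _ Hx Hy).
Qed.

Definition sw (P Q : Type) (x : P * Q) := (snd x, fst x).

Lemma good_swap I P Q (RP : I -> P -> P -> Prop) (RQ : I -> Q -> Q -> Prop) s :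
  good RP RQ s -> good RQ RP (List.map (@sw P Q) s).
Proof.
move=> Hg x y /List.in_map_iff [x' [<- Hx]] /List.in_map_iff [y' [<- Hy]] i /=.
by split => H; apply/(Hg _ _ Hx Hy i).
Qed.

Lemma swsw P Q (s : list (P * Q)) : List.map (@sw Q P) (List.map (@sw P Q) s) = s.
Proof. by elim: s => [|[a b] s IH] //=; rewrite IH. Qed.

Lemma back I P Q (RP : I -> P -> P -> Prop) (RQ : I -> Q -> Q -> Prop) (i0 : I) s q :
  slo_all RP -> slo_all RQ -> ext RP -> good RP RQ s ->
  exists p, good RP RQ ((p, q) :: s).
Proof.
move=> HP HQ HE Hg.
have [p Hp] := forth i0 q HQ HP HE (good_swap Hg).
exists p; rewrite -(swsw ((p, q) :: s)); exact: good_swap Hp.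
Qed.

Lemma step_ex I P Q (RP : I -> P -> P -> Prop) (RQ : I -> Q -> Q -> Prop) (i0 : I)
  (fP : P -> nat) (fQ : Q -> nat) :
  slo_all RP -> slo_all RQ -> ext RP -> ext RQ ->
  (forall a b, fP a = fP b -> a = b) -> (forall a b, fQ a = fQ b -> a = b) ->
  forall (ks : nat * list (P * Q)), exists s', good RP RQ (snd ks) ->
    good RP RQ s' /\ (forall x, List.In x (snd ks) -> List.In x s') /\
    (forall p, fP p = fst ks -> exists q, List.In (p, q) s') /\
    (forall q, fQ q = fst ks -> exists p, List.In (p, q) s').
Proof.
move=> HP HQ EP EQ iP iQ [k s] /=.
case: (classic (good RP RQ s)) => [Hg|Hng]; last by exists s.
have [s1 [G1 [I1 C1]]] : exists s1, good RP RQ s1 /\ (forall x, List.In x s -> List.In x s1) /\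
   forall p, fP p = k -> exists q, List.In (p, q) s1.
  case: (classic (exists p, fP p = k)) => [[p Hp]|Hn].
  - have [q Hq] := forth i0 p HP HQ EQ Hg.
    exists ((p, q) :: s); split => //; split; first by move=> x Hx; right.
    move=> p' Hp'; have -> : p' = p by apply: iP; rewrite Hp Hp'.
    by exists q; left.
  - exists s; split => //; split => // p Hp; by case: Hn; exists p.
have [s2 [G2 [I2 C2]]] : exists s2, good RP RQ s2 /\ (forall x, List.In x s1 -> List.In x s2) /\
   forall q, fQ q = k -> exists p, List.In (p, q) s2.
  case: (classic (exists q, fQ q = k)) => [[q Hq]|Hn].
  - have [p Hp] := back i0 q HP HQ EP G1.
    exists ((p, q) :: s1); split => //; split; first by move=> x Hx; right.
    move=> q' Hq'; have -> : q' = q by apply: iQ; rewrite Hq Hq'.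
    by exists p; left.
  - exists s1; split => //; split => // q Hq; by case: Hn; exists q.
exists s2 => _; split => //; split; first by move=> x /I1 /I2.
split => // p /C1 [q Hq]; exists q; exact: I2.
Qed.

Fixpoint iterS (A : Type) (st : nat * list A -> list A) (k : nat) : list A :=
  match k with O => nil | S k' => st (k', iterS st k') end.

Lemma back_forth I P Q (RP : I -> P -> P -> Prop) (RQ : I -> Q -> Q -> Prop) (i0 : I) :
  slo_all RP -> slo_all RQ -> ext RP -> ext RQ ->
  countable_type P -> countable_type Q ->
  exists f : P -> Q, (exists g : Q -> P, (forall a, g (f a) = a) /\ (forall b, f (g b) = b)) /\
   forall i a b, RP i a b <-> RQ i (f a) (f b).
Proof.
move=> HP HQ EP EQ [fP iP] [fQ iQ].
have [st Hst] := fchoice (step_ex i0 HP HQ EP EQ iP iQ).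
pose S := iterS st.
have GS : forall k, good RP RQ (S k).
  elim=> [|k IH]; first by move=> x y [].
  exact: (proj1 (Hst (k, S k) IH)).
have IS1 : forall k x, List.In x (S k) -> List.In x (S k.+1).
  move=> k; exact: (proj1 (proj2 (Hst (k, S k) (GS k)))).
have IS : forall k d x, List.In x (S k) -> List.In x (S (k + d)%N).
  move=> k; elim=> [|d IH] x Hx; first by rewrite addn0.
  rewrite addnS; apply: IS1; exact: IH.
have IM : forall k m x y, List.In x (S k) -> List.In y (S m) ->
    List.In x (S (maxn k m)) /\ List.In y (S (maxn k m)).
  move=> k m x y Hx Hy; split.
  - rewrite -(subnKC (leq_maxl k m)); exact: IS.
  - rewrite -(subnKC (leq_maxr k m)); exact: IS.
have CP : forall p, exists q, List.In (p, q) (S (fP p).+1).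
  move=> p; exact: (proj1 (proj2 (proj2 (Hst (fP p, S (fP p)) (GS _))))).
have CQ : forall q, exists p, List.In (p, q) (S (fQ q).+1).
  move=> q; exact: (proj2 (proj2 (proj2 (Hst (fQ q, S (fQ q)) (GS _))))).
have [f Hf] := fchoice CP; have [g Hg] := fchoice CQ.
exists f; split; first exists g; first split.
- move=> a; have [H1 H2] := IM _ _ _ _ (Hf a) (Hg (f a)).
  exact: (good_inj2 i0 HP HQ (GS _) H2 H1).
- move=> b; have [H1 H2] := IM _ _ _ _ (Hf (g b)) (Hg b).
  exact: (good_inj1 i0 HP HQ (GS _) H1 H2).
- move=> i a b; have [H1 H2] := IM _ _ _ _ (Hf a) (Hf b).
  exact: (GS _ _ _ H1 H2 i).
Qed.

Local Open Scope ring_scope.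

Lemma ext_of_DPO (n : nat) (P : Type) (lt : P -> P -> Prop) (lts : 'I_n -> P -> P -> Prop) :
  DPO lt lts -> ext lts.
Proof.
move=> [[[p0] [Hs _]] Hd] F c Hdc.
case: (classic (F = nil)) => [->|HF]; first by exists p0.
have Hg : forall i, exists lr : option P * option P, is_gap (lts i) F lr.1 lr.2 /\
    (forall x u, List.In x F -> c i x -> lt_low (lts i) lr.1 u -> lts i x u) /\
    (forall x u, List.In x F -> ~ c i x -> lt_up (lts i) u lr.2 -> lts i u x).
  move=> i; have [l [r H]] := gap_exists (Hs i) (Hdc i); by exists (l, r).
have [lr Hlr] := fchoice Hg.
have [u Hu] := Hd F (fun i => (lr i).1) (fun i => (lr i).2) HF (fun i => proj1 (Hlr i)).
exists u => i x xF; split => cx.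
- exact: (proj1 (proj2 (Hlr i))) x u xF cx (proj1 (Hu i)).
- exact: (proj2 (proj2 (Hlr i))) x u xF cx (proj2 (Hu i)).
Qed.

Lemma Dval_inj (n : nat) (D : {ffun 'I_n -> rat} -> Prop) (a b : Dcar D) :
  proj1_sig a = proj1_sig b -> a = b.
Proof.
case: a b => [x px] [y py] /= E; subst y; by rewrite (proof_irrelevance _ px py).
Qed.

Lemma D_slo (n : nat) (D : {ffun 'I_n -> rat} -> Prop) :
  distinct_coords D -> slo_all (Dlts (D:=D)).
Proof.
move=> Hdc i; split; [|split].
- move=> a; rewrite /Dlts ltxx; done.
- move=> a b c; rewrite /Dlts; exact: lt_trans.
- move=> a b Hne; rewrite /Dlts.
  have Hv : proj1_sig a <> proj1_sig b by move=> E; apply: Hne; exact: Dval_inj.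
  have := Hdc _ _ (proj2_sig a) (proj2_sig b) Hv i.
  case: (ltgtP (proj1_sig a i) (proj1_sig b i)) => H; by [left|right|].
Qed.

Lemma Dlt_iff (n : nat) (D : {ffun 'I_n -> rat} -> Prop) (i0 : 'I_n) :
  distinct_coords D -> forall a b : Dcar D, Dlt a b <-> (forall i, Dlts i a b).
Proof.
move=> Hdc a b; split.
- move=> [Hle Hne] i; rewrite /Dlts lt_neqAle Hle andbT.
  apply/eqP; exact: Hdc _ _ (proj2_sig a) (proj2_sig b) Hne i.
- move=> H; split.
  + move=> i; exact: ltW (H i).
  + move=> E; have := H i0; rewrite /Dlts E ltxx; done.
Qed.

Lemma D_box (n : nat) (D : {ffun 'I_n -> rat} -> Prop) :
  dense_in_Qn D -> forall l r : 'I_n -> option (Dcar D),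
  (forall i, lt_ends (Dlts (D:=D) i) (l i) (r i)) ->
  exists u, forall i, lt_low (Dlts (D:=D) i) (l i) u /\ lt_up (Dlts (D:=D) i) u (r i).
Proof.
move=> Hd l r He.
pose lo := fun i => match l i, r i with
  | Some a, _ => proj1_sig a i | None, Some b => proj1_sig b i - 1 | None, None => 0 end.
pose hi := fun i => match r i, l i with
  | Some b, _ => proj1_sig b i | None, Some a => proj1_sig a i + 1 | None, None => 1 end.
have Hlh : forall i, [ffun i => lo i] i < [ffun i => hi i] i.
  move=> i; rewrite !ffunE /lo /hi; move: (He i).
  case: (l i) => [a|]; case: (r i) => [b|] //= H; by rewrite ?ltrDl ?gtrBl ?ltr01.
have [x [Dx Hx]] := Hd _ _ Hlh.
exists (exist _ x Dx) => i; move: (Hx i) (He i); rewrite !ffunE /lo /hi /Dlts /=.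
case: (l i) => [a|]; case: (r i) => [b|] //= /andP [H1 H2] _; by [].
Qed.

Lemma ext_D (n : nat) (D : {ffun 'I_n -> rat} -> Prop) :
  dense_in_Qn D -> distinct_coords D -> ext (Dlts (D:=D)).
Proof.
move=> Hd Hdc F c Hc.
have Hg : forall i, exists lr : option (Dcar D) * option (Dcar D),
    is_gap (Dlts i) F lr.1 lr.2 /\
    (forall x u, List.In x F -> c i x -> lt_low (Dlts i) lr.1 u -> Dlts i x u) /\
    (forall x u, List.In x F -> ~ c i x -> lt_up (Dlts i) u lr.2 -> Dlts i u x).
  move=> i; have [l [r H]] := gap_exists (D_slo Hdc i) (Hc i); by exists (l, r).
have [lr Hlr] := fchoice Hg.
have [u Hu] := D_box Hd (l := fun i => (lr i).1) (r := fun i => (lr i).2)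
   (fun i => proj1 (proj2 (proj2 (proj1 (Hlr i))))).
exists u => i x xF; split => cx.
- exact: (proj1 (proj2 (Hlr i))) x u xF cx (proj1 (Hu i)).
- exact: (proj2 (proj2 (Hlr i))) x u xF cx (proj2 (Hu i)).
Qed.

Theorem theorem4p5 (n : nat) (D : {ffun 'I_n -> rat} -> Prop) :
  (2 <= n)%N -> dense_in_Qn D -> distinct_coords D ->
  (countable_type (Dcar D) /\ DPO (Dlt (D:=D)) (Dlts (D:=D))) /\
  (forall (P : Type) (lt : P -> P -> Prop) (lts : 'I_n -> P -> P -> Prop),
      countable_type P -> DPO lt lts ->
      isomorphic lt lts (Dlt (D:=D)) (Dlts (D:=D))).
Proof.
move=> Hn Hd Hdc.
pose i0 : 'I_n := Ordinal (leq_trans (isT : (0 < 2)%N) Hn).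
have CD : countable_type (Dcar D).
  exists (fun a => pickle (proj1_sig a)) => a b E; apply: Dval_inj; exact: (pcan_inj pickleK_inv E).
split; first split => //.
  split; last first.
    move=> F l r _ Hgap; apply: D_box => // i; exact: (proj1 (proj2 (proj2 (Hgap i)))).
  split; last split.
  - have [x [Dx _]] := Hd [ffun _ => 0] [ffun _ => 1] (fun i => ltac:(by rewrite !ffunE ltr01)).
    by constructor; exists x.
  - exact: D_slo.
  - move=> a b; exact: Dlt_iff.
move=> P lt lts CP HDPO.
have [f [Hfg Hf]] := back_forth i0 (proj1 (proj2 (proj1 HDPO))) (D_slo Hdc)
   (ext_of_DPO HDPO) (ext_D Hd Hdc) CP CD.
exists f; split => //; split => // a b.
rewrite (proj2 (proj2 (proj1 HDPO))) (Dlt_iff i0 Hdc); split => H i; apply/Hf; exact: H.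
Qed.
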